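(* Let $C_5$ be a spherical pentagon on $\mathbb{S}^2$ with vertices $\mathbf{p}_1,\dots,\mathbf{p}_5$ in cyclic order, all of whose five sides have length $\pi/3$, triangulated by the diagonals $\mathbf{p}_1\mathbf{p}_3$ and $\mathbf{p}_1\mathbf{p}_4$, both of length greater than $\pi/3$, into the triangles $\mathbf{p}_1\mathbf{p}_2\mathbf{p}_3$, $\mathbf{p}_1\mathbf{p}_3\mathbf{p}_4$, $\mathbf{p}_1\mathbf{p}_4\mathbf{p}_5$. Let $\alpha$ and $\beta$ be the angles at $\mathbf{p}_2$ in $\mathbf{p}_1\mathbf{p}_2\mathbf{p}_3$ and at $\mathbf{p}_5$ in $\mathbf{p}_1\mathbf{p}_4\mathbf{p}_5$, respectively; let $\alpha'$ and $\beta'$ be the angles at $\mathbf{p}_1$ in $\mathbf{p}_1\mathbf{p}_2\mathbf{p}_3$ and in $\mathbf{p}_1\mathbf{p}_4\mathbf{p}_5$, respectively; and let $\omega$ be the angle at $\mathbf{p}_1$ in $\mathbf{p}_1\mathbf{p}_3\mathbf{p}_4$ (opposite its side $\mathbf{p}_3\mathbf{p}_4$ of length $\pi/3$). If $\alpha,\beta\in\{2\pi-k\arccos(1/3): k=3,4\}$, then $\alpha'+\beta'+\omega\notin\{2\pi-k\arccos(1/3): k=1,2,3,4\}$.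
   Context: $\mathbb{S}^2$ is the unit sphere in $\mathbb{E}^3$ with spherical (geodesic) distance; sides are great-circle arcs. $\arccos(1/3)$ is the angle of a spherical equilateral triangle of side length $\pi/3$. *)

(* Defs.v *)
From Stdlib Require Import Reals Lra.
Open Scope R_scope.

Record pt := Pt { px : R; py : R; pz : R }.

Definition dot (a b : pt) : R := px a * px b + py a * py b + pz a * pz b.
Definition vadd (a b : pt) : pt := Pt (px a + px b) (py a + py b) (pz a + pz b).
Definition vscale (s : R) (a : pt) : pt := Pt (s * px a) (s * py a) (s * pz a).
Definition vsub (a b : pt) : pt := vadd a (vscale (-1) b).
Definition vnorm (a : pt) : R := sqrt (dot a a).

Definition on_sphere (a : pt) : Prop := dot a a = 1.

Definition sdist (a b : pt) : R := acos (dot a b).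

(* angle at vertex v of the spherical triangle a v b: the angle between the
   tangent vectors at v of the great-circle arcs v->a and v->b *)
Definition tangent_at (v a : pt) : pt := vsub a (vscale (dot a v) v).
Definition sangle (a v b : pt) : R :=
  let ta := tangent_at v a in
  let tb := tangent_at v b in
  acos (dot ta tb / (vnorm ta * vnorm tb)).

(* x lies on the (minor) great-circle arc from a to b *)
Definition on_arc (a b x : pt) : Prop :=
  on_sphere x /\ exists s t : R, 0 <= s /\ 0 <= t /\ x = vadd (vscale s a) (vscale t b).

Definition simple_pentagon (p1 p2 p3 p4 p5 : pt) : Prop :=
  (forall x, on_arc p1 p2 x -> on_arc p2 p3 x -> x = p2) /\
  (forall x, on_arc p2 p3 x -> on_arc p3 p4 x -> x = p3) /\
  (forall x, on_arc p3 p4 x -> on_arc p4 p5 x -> x = p4) /\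
  (forall x, on_arc p4 p5 x -> on_arc p5 p1 x -> x = p5) /\
  (forall x, on_arc p5 p1 x -> on_arc p1 p2 x -> x = p1) /\
  (forall x, on_arc p1 p2 x -> ~ on_arc p3 p4 x) /\
  (forall x, on_arc p1 p2 x -> ~ on_arc p4 p5 x) /\
  (forall x, on_arc p2 p3 x -> ~ on_arc p4 p5 x) /\
  (forall x, on_arc p2 p3 x -> ~ on_arc p5 p1 x) /\
  (forall x, on_arc p3 p4 x -> ~ on_arc p5 p1 x).

Definition on_boundary (p1 p2 p3 p4 p5 x : pt) : Prop :=
  on_arc p1 p2 x \/ on_arc p2 p3 x \/ on_arc p3 p4 x \/ on_arc p4 p5 x \/ on_arc p5 p1 x.

Definition proper_diagonals (p1 p2 p3 p4 p5 : pt) : Prop :=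
  (forall x, on_arc p1 p3 x -> on_boundary p1 p2 p3 p4 p5 x -> x = p1 \/ x = p3) /\
  (forall x, on_arc p1 p4 x -> on_boundary p1 p2 p3 p4 p5 x -> x = p1 \/ x = p4) /\
  (forall x, on_arc p1 p3 x -> on_arc p1 p4 x -> x = p1).

Definition special_angle (k : nat) : R := 2 * PI - INR k * acos (1 / 3).

(* Main.v *)
Require Import Defs.
From Stdlib Require Import Reals.
From Stdlib Require Import Lra Lia Psatz Factorial.
Open Scope R_scope.

Lemma ca3 a : cos_approx a 3 = 1 - a^2/2 + a^4/24 - a^6/720.
Proof. unfold cos_approx. cbn [sum_f_R0]. unfold cos_term.
 rewrite !INR_IZR_INZ.
 change (Z.of_nat (Factorial.fact (2*3))) with 720%Z.
 change (Z.of_nat (Factorial.fact (2*2))) with 24%Z.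
 change (Z.of_nat (Factorial.fact (2*1))) with 2%Z.
 change (Z.of_nat (Factorial.fact (2*0))) with 1%Z.
 simpl pow. field. Qed.

Lemma ca4 a : cos_approx a 4 = 1 - a^2/2 + a^4/24 - a^6/720 + a^8/40320.
Proof. unfold cos_approx. cbn [sum_f_R0]. unfold cos_term.
 rewrite !INR_IZR_INZ.
 change (Z.of_nat (Factorial.fact (2*4))) with 40320%Z.
 change (Z.of_nat (Factorial.fact (2*3))) with 720%Z.
 change (Z.of_nat (Factorial.fact (2*2))) with 24%Z.
 change (Z.of_nat (Factorial.fact (2*1))) with 2%Z.
 change (Z.of_nat (Factorial.fact (2*0))) with 1%Z.
 simpl pow. field. Qed.

Lemma cos_lo a : -2 <= a <= 2 -> 1 - a^2/2 + a^4/24 - a^6/720 <= cos a.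
Proof. intros. rewrite <- ca3. apply (pre_cos_bound a 1); lra. Qed.

Lemma cos_hi a : -2 <= a <= 2 -> cos a <= 1 - a^2/2 + a^4/24 - a^6/720 + a^8/40320.
Proof. intros. rewrite <- ca4. apply (pre_cos_bound a 1); lra. Qed.

Lemma PI_bnd : 312/100 < PI < 315/100.
Proof.
  split.
  - destruct (Rlt_le_dec (156/100) (PI/2)) as [h|h]; [lra|].
    assert (cos (156/100) <= 0) by (apply cos_le_0; [lra| pose proof PI2_3_2; lra]).
    pose proof (cos_lo (156/100)). lra.
  - destruct (Rlt_le_dec (PI/2) (1575/1000)) as [h|h]; [lra|].
    assert (0 <= cos (1575/1000)) by (apply cos_ge_0; pose proof PI2_3_2; lra).
    pose proof (cos_hi (1575/1000)). lra.
Qed.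

Lemma acos_bnd E lo hi : 0 <= lo -> lo < hi -> hi <= 2 ->
  E < 1 - lo^2/2 + lo^4/24 - lo^6/720 ->
  1 - hi^2/2 + hi^4/24 - hi^6/720 + hi^8/40320 < E ->
  lo < acos E < hi.
Proof.
  intros h0 h1 h2 hl hh.
  pose proof (cos_lo lo) as Cl. pose proof (cos_hi hi) as Ch.
  pose proof PI_bnd.
  assert (Hc1 := COS_bound lo). assert (Hc2 := COS_bound hi).
  assert (HE : -1 <= E <= 1) by lra.
  pose proof (cos_acos E HE) as Hca. pose proof (acos_bound E) as Hb.
  split.
  - destruct (Rlt_le_dec lo (acos E)) as [h|h]; [exact h|].
    destruct h as [h|h].
    + pose proof (cos_decreasing_1 (acos E) lo ltac:(lra) ltac:(lra) ltac:(lra) ltac:(lra) h). lra.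
    + rewrite h in Hca. lra.
  - destruct (Rlt_le_dec (acos E) hi) as [h|h]; [exact h|].
    destruct h as [h|h].
    + pose proof (cos_decreasing_1 hi (acos E) ltac:(lra) ltac:(lra) ltac:(lra) ltac:(lra) h). lra.
    + rewrite <- h in Hca. lra.
Qed.

Lemma lt_div_sqrt r n A B : 0 < n -> 0 < A -> 0 < B ->
  (r <= 0 \/ r^2*A*B < n^2) -> r < n/(sqrt A * sqrt B).
Proof.
  intros hn hA hB h.
  assert (hs : 0 < sqrt A * sqrt B) by (apply Rmult_lt_0_compat; apply sqrt_lt_R0; lra).
  assert (hs2 : (sqrt A * sqrt B)^2 = A * B).
  { simpl. rewrite Rmult_1_r. replace (sqrt A * sqrt B * (sqrt A * sqrt B)) with
     ((sqrt A * sqrt A) * (sqrt B * sqrt B)) by ring. rewrite !sqrt_sqrt; lra. }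
  set (s := sqrt A * sqrt B) in *.
  apply (Rmult_lt_reg_r s); [lra|].
  replace (n / s * s) with n by (field; lra).
  destruct h as [h|h].
  { assert (r*s <= 0*s) by (apply Rmult_le_compat_r; lra). lra. }
  destruct (Rlt_le_dec (r*s) n) as [hh|hh]; [lra|].
  exfalso. assert (HH : n*n <= (r*s)*(r*s)) by (apply Rmult_le_compat; lra).
  replace ((r*s)*(r*s)) with (r^2*(s^2)) in HH by ring.
  rewrite hs2 in HH. lra.
Qed.

Lemma div_sqrt_lt r n A B : 0 < n -> 0 < A -> 0 < B -> 0 < r ->
  n^2 < r^2*A*B -> n/(sqrt A * sqrt B) < r.
Proof.
  intros hn hA hB hr h.
  assert (hs : 0 < sqrt A * sqrt B) by (apply Rmult_lt_0_compat; apply sqrt_lt_R0; lra).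
  assert (hs2 : (sqrt A * sqrt B)^2 = A * B).
  { simpl. rewrite Rmult_1_r. replace (sqrt A * sqrt B * (sqrt A * sqrt B)) with
     ((sqrt A * sqrt A) * (sqrt B * sqrt B)) by ring. rewrite !sqrt_sqrt; lra. }
  set (s := sqrt A * sqrt B) in *.
  apply (Rmult_lt_reg_r s); [lra|].
  replace (n / s * s) with n by (field; lra).
  destruct (Rlt_le_dec n (r*s)) as [hh|hh]; [lra|].
  exfalso. assert (0 < r*s) by (apply Rmult_lt_0_compat; lra).
  assert (HH : (r*s)*(r*s) <= n*n) by (apply Rmult_le_compat; lra).
  replace ((r*s)*(r*s)) with (r^2*(s^2)) in HH by ring.
  rewrite hs2 in HH. lra.
Qed.

Lemma acos_sq n A B lo hi : 0 < n -> 0 < A -> 0 < B -> 0 <= lo -> lo < hi -> hi <= 2 ->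
  0 < 1 - lo^2/2 + lo^4/24 - lo^6/720 ->
  n^2 < (1 - lo^2/2 + lo^4/24 - lo^6/720)^2 * A * B ->
  (1 - hi^2/2 + hi^4/24 - hi^6/720 + hi^8/40320 <= 0 \/
   (1 - hi^2/2 + hi^4/24 - hi^6/720 + hi^8/40320)^2 * A * B < n^2) ->
  lo < acos (n/(sqrt A * sqrt B)) < hi.
Proof.
  intros. apply acos_bnd; try lra.
  - apply div_sqrt_lt; lra.
  - apply lt_div_sqrt; lra.
Qed.

Lemma dot_sym a b : dot a b = dot b a.
Proof. unfold dot; ring. Qed.

Lemma tdot v a b : dot v v = 1 ->
  dot (tangent_at v a) (tangent_at v b) = dot a b - dot a v * dot b v.
Proof.
  intro H. transitivity (dot a b - 2 * dot a v * dot b v + dot a v * dot b v * dot v v).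
  - destruct a, b, v; unfold tangent_at, vsub, vadd, vscale, dot; simpl; ring.
  - rewrite H; ring.
Qed.

Lemma sangle_eq a v b : on_sphere a -> on_sphere v -> on_sphere b ->
  sangle a v b = acos ((dot a b - dot a v * dot b v) /
     (sqrt (1 - dot a v ^ 2) * sqrt (1 - dot b v ^ 2))).
Proof.
  unfold on_sphere, sangle, vnorm; intros ha hv hb.
  rewrite !tdot by exact hv. rewrite ha, hb. simpl pow. rewrite !Rmult_1_r. reflexivity.
Qed.

Lemma dot_bound a b : on_sphere a -> on_sphere b -> -1 <= dot a b <= 1.
Proof.
  unfold on_sphere, dot; destruct a as [x1 y1 z1], b as [x2 y2 z2]; simpl; intros.
  pose proof (Rle_0_sqr (x1-x2)); pose proof (Rle_0_sqr (y1-y2)); pose proof (Rle_0_sqr (z1-z2)).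
  pose proof (Rle_0_sqr (x1+x2)); pose proof (Rle_0_sqr (y1+y2)); pose proof (Rle_0_sqr (z1+z2)).
  unfold Rsqr in *. split; nra.
Qed.

Lemma sdist_half a b : on_sphere a -> on_sphere b -> sdist a b = PI/3 -> dot a b = 1/2.
Proof.
  unfold sdist; intros ha hb h.
  rewrite <- (cos_acos (dot a b)) by (apply dot_bound; auto).
  rewrite h. apply cos_PI3.
Qed.

Lemma acos_val X s : acos X = s -> 0 < s < PI -> X = cos s.
Proof.
  intros h hs.
  destruct (Rle_dec (-1) X) as [h1|h1].
  - destruct (Rle_dec X 1) as [h2|h2].
    + rewrite <- h. rewrite cos_acos; lra.
    + unfold acos in h. destruct (Rle_dec X (-1)); [lra|].
      destruct (Rle_dec 1 X); lra.
  - unfold acos in h. destruct (Rle_dec X (-1)); lra.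
Qed.

Lemma theta_bnd : 122/100 < acos (1/3) < 124/100.
Proof. apply acos_bnd; lra. Qed.

Lemma cos_theta : cos (acos (1/3)) = 1/3.
Proof. apply cos_acos; lra. Qed.

Lemma sa_cos3 : cos (special_angle 3) = -23/27.
Proof.
  unfold special_angle. replace (INR 3) with 3 by (simpl; ring).
  set (t := acos (1/3)).
  rewrite cos_minus, cos_2PI, sin_2PI.
  replace (3*t) with (2*t + t) by ring.
  rewrite cos_plus, cos_2a_cos, sin_2a.
  pose proof (sin2_cos2 t). pose proof cos_theta. fold t in H0.
  rewrite H0. unfold Rsqr in H. rewrite H0 in H. nra.
Qed.

Lemma sa_cos4 : cos (special_angle 4) = 17/81.
Proof.
  unfold special_angle. replace (INR 4) with 4 by (simpl; ring).
  set (t := acos (1/3)).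
  rewrite cos_minus, cos_2PI, sin_2PI.
  replace (4*t) with (2*(2*t)) by ring.
  rewrite cos_2a_cos, cos_2a_cos.
  pose proof cos_theta. fold t in H.
  rewrite H. unfold Rsqr. nra.
Qed.

Lemma sa_bnd k : (1 <= k <= 4)%nat ->
  special_angle k = 2*PI - INR k * acos (1/3).
Proof. reflexivity. Qed.

Lemma c_val c :
  (acos ((c - 1/2 * (1/2)) / (sqrt (1 - (1/2)^2) * sqrt (1 - (1/2)^2))) = special_angle 3 \/
   acos ((c - 1/2 * (1/2)) / (sqrt (1 - (1/2)^2) * sqrt (1 - (1/2)^2))) = special_angle 4) ->
  c = -7/18 \/ c = 11/27.
Proof.
  intros hX.
  pose proof theta_bnd. pose proof PI_bnd.
  assert (hsq : sqrt (1 - (1/2)^2) * sqrt (1 - (1/2)^2) = 3/4)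
    by (rewrite sqrt_sqrt; lra).
  rewrite hsq in hX.
  destruct hX as [h|h]; apply acos_val in h.
  - rewrite sa_cos3 in h. left. lra.
  - unfold special_angle; replace (INR 3) with 3 by (simpl; ring); lra.
  - rewrite sa_cos4 in h. right. lra.
  - unfold special_angle; replace (INR 4) with 4 by (simpl; ring); lra.
Qed.

Lemma final c13 c14 k : (c13 = -7/18 \/ c13 = 11/27) -> (c14 = -7/18 \/ c14 = 11/27) ->
  (1 <= k <= 4)%nat ->
  acos ((1/2 - 1/2 * c13) / (sqrt (1 - (1/2)^2) * sqrt (1 - c13^2))) +
  acos ((1/2 - c14 * (1/2)) / (sqrt (1 - c14^2) * sqrt (1 - (1/2)^2))) +
  acos ((1/2 - c13 * c14) / (sqrt (1 - c13^2) * sqrt (1 - c14^2))) <> special_angle k.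
Proof.
  intros h13 h14 hk.
  pose proof theta_bnd. pose proof PI_bnd.
  assert (Hk : special_angle k = 2*PI - INR k * acos (1/3)) by reflexivity.
  assert (hkv : INR k = 1 \/ INR k = 2 \/ INR k = 3 \/ INR k = 4).
  { destruct k as [|[|[|[|[|k]]]]]; simpl; try lia; lra. }
  rewrite Hk.
  destruct h13 as [-> | ->]; destruct h14 as [-> | ->].
  - assert (0.50 < acos ((1/2 - 1/2 * (-7/18)) / (sqrt (1 - (1/2)^2) * sqrt (1 - (-7/18)^2))) < 0.53)
      by (apply acos_sq; lra).
    assert (0.50 < acos ((1/2 - (-7/18) * (1/2)) / (sqrt (1 - (-7/18)^2) * sqrt (1 - (1/2)^2))) < 0.53)
      by (apply acos_sq; lra).
    assert (1.13 < acos ((1/2 - (-7/18) * (-7/18)) / (sqrt (1 - (-7/18)^2) * sqrt (1 - (-7/18)^2))) < 1.16)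
      by (apply acos_sq; lra).
    destruct hkv as [e|[e|[e|e]]]; rewrite e; lra.
  - assert (0.50 < acos ((1/2 - 1/2 * (-7/18)) / (sqrt (1 - (1/2)^2) * sqrt (1 - (-7/18)^2))) < 0.53)
      by (apply acos_sq; lra).
    assert (1.17 < acos ((1/2 - (11/27) * (1/2)) / (sqrt (1 - (11/27)^2) * sqrt (1 - (1/2)^2))) < 1.20)
      by (apply acos_sq; lra).
    assert (0.66 < acos ((1/2 - (-7/18) * (11/27)) / (sqrt (1 - (-7/18)^2) * sqrt (1 - (11/27)^2))) < 0.69)
      by (apply acos_sq; lra).
    destruct hkv as [e|[e|[e|e]]]; rewrite e; lra.
  - assert (1.17 < acos ((1/2 - 1/2 * (11/27)) / (sqrt (1 - (1/2)^2) * sqrt (1 - (11/27)^2))) < 1.20)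
      by (apply acos_sq; lra).
    assert (0.50 < acos ((1/2 - (-7/18) * (1/2)) / (sqrt (1 - (-7/18)^2) * sqrt (1 - (1/2)^2))) < 0.53)
      by (apply acos_sq; lra).
    assert (0.66 < acos ((1/2 - (11/27) * (-7/18)) / (sqrt (1 - (11/27)^2) * sqrt (1 - (-7/18)^2))) < 0.69)
      by (apply acos_sq; lra).
    destruct hkv as [e|[e|[e|e]]]; rewrite e; lra.
  - assert (1.17 < acos ((1/2 - 1/2 * (11/27)) / (sqrt (1 - (1/2)^2) * sqrt (1 - (11/27)^2))) < 1.20)
      by (apply acos_sq; lra).
    assert (1.17 < acos ((1/2 - (11/27) * (1/2)) / (sqrt (1 - (11/27)^2) * sqrt (1 - (1/2)^2))) < 1.20)
      by (apply acos_sq; lra).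
    assert (1.14 < acos ((1/2 - (11/27) * (11/27)) / (sqrt (1 - (11/27)^2) * sqrt (1 - (11/27)^2))) < 1.17)
      by (apply acos_sq; lra).
    destruct hkv as [e|[e|[e|e]]]; rewrite e; lra.
Qed.

Theorem lemma5 (p1 p2 p3 p4 p5 : pt) :
  on_sphere p1 -> on_sphere p2 -> on_sphere p3 -> on_sphere p4 -> on_sphere p5 ->
  sdist p1 p2 = PI / 3 -> sdist p2 p3 = PI / 3 -> sdist p3 p4 = PI / 3 ->
  sdist p4 p5 = PI / 3 -> sdist p5 p1 = PI / 3 ->
  simple_pentagon p1 p2 p3 p4 p5 ->
  proper_diagonals p1 p2 p3 p4 p5 ->
  sdist p1 p3 > PI / 3 -> sdist p1 p4 > PI / 3 ->
  (sangle p1 p2 p3 = special_angle 3 \/ sangle p1 p2 p3 = special_angle 4) ->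
  (sangle p1 p5 p4 = special_angle 3 \/ sangle p1 p5 p4 = special_angle 4) ->
  forall k : nat, (1 <= k <= 4)%nat ->
    sangle p2 p1 p3 + sangle p4 p1 p5 + sangle p3 p1 p4 <> special_angle k.
Proof.
  intros h1 h2 h3 h4 h5 d12 d23 d34 d45 d51 _ _ _ _ ha hb k hk.
  apply sdist_half in d12; auto. apply sdist_half in d23; auto.
  apply sdist_half in d34; auto. apply sdist_half in d45; auto.
  apply sdist_half in d51; auto.
  rewrite sangle_eq in ha, hb by auto.
  rewrite !sangle_eq by auto.
  assert (e21 : dot p2 p1 = 1/2) by (rewrite dot_sym; auto).
  assert (e32 : dot p3 p2 = 1/2) by (rewrite dot_sym; auto).
  assert (e15 : dot p1 p5 = 1/2) by (rewrite dot_sym; auto).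
  assert (e43 : dot p4 p3 = 1/2) by (rewrite dot_sym; auto).
  assert (e31 : dot p3 p1 = dot p1 p3) by apply dot_sym.
  assert (e41 : dot p4 p1 = dot p1 p4) by apply dot_sym.
  rewrite d12, e32 in ha. rewrite e15, d45 in hb.
  apply c_val in ha. apply c_val in hb.
  rewrite d23, e21, e31, e41, d45, d51, d34.
  apply final; auto.
Qed.
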